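(* Let $\mathbf C$ be an admissible category of lattices. Then the functor $\mathbb P:\mathbf{Conv}\to(\mathbf C^{\mathrm{conv}})^{op}$ is left adjoint to the functor $\mathrm{pt}:(\mathbf C^{\mathrm{conv}})^{op}\to\mathbf{Conv}$; that is, $\mathbb P\dashv\mathrm{pt}$ is an adjunction between $\mathbf{Conv}$ and $(\mathbf C^{\mathrm{conv}})^{op}$.
   Context: An inf-semilattice is a poset with all finite infima (including a top element $\top$). A filter on an inf-semilattice $L$ is a non-empty upward-closed subset of $L$ closed under binary meets; $L$ itself counts as a filter. $\mathbb F L$ is the set of filters on $L$, ordered by inclusion. For a set $X$, $\mathbb P(X)$ is its powerset ordered by inclusion; filters on $\mathbb P(X)$ are called filters of subsets of $X$. Let $\mathbf C$ be a category whose objects are inf-semilattices. A convergence $\mathbf C$-object is a pair $(L,\lim_L)$ where $L$ is a $\mathbf C$-object and $\lim_L:\mathbb F L\to L$ is monotone. The category $\mathbf C^{\mathrm{conv}}$ has these as objects; its morphisms $\varphi:L\to L'$ are the $\mathbf C$-morphisms that are continuous: $\lim_{L'}\mathcal F\le\varphi(\lim_L\varphi^{-1}(\mathcal F))$ for every $\mathcal F\in\mathbb F L'$. $\mathbf C$ is a category of lattices if all its objects are lattices and all its morphisms preserve finite suprema and finite infima. $\mathbf C$ is admissible if $\mathbb P(X)$ is a $\mathbf C$-object for every set $X$, and there are two classes of index sets $\mathcal I,\mathcal J$ such that for all $\mathbf C$-objects $L,L'$ the $\mathbf C$-morphisms $L\to L'$ are exactly the monotone maps preserving all $I$-indexed infima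 existing in $L$ ($I\in\mathcal I$) and all $J$-indexed suprema existing in $L$ ($J\in\mathcal J$). A convergence space is a set $X$ with a relation $\to$ between filters of subsets of $X$ and points of $X$ such that $\dot x\to x$ for all $x$, where $\dot x=\{S\subseteq X: x\in S\}$, and $\mathcal F\to x$, $\mathcal F\subseteq\mathcal G$ imply $\mathcal G\to x$. A map $f:X\to Y$ is continuous if $\mathcal F\to x$ implies $f[\mathcal F]\to f(x)$, where $f[\mathcal F]=\{B\subseteq Y: f^{-1}(B)\in\mathcal F\}$. These form the category $\mathbf{Conv}$. The functor $\mathbb P$ sends a convergence space $X$ to $(\mathbb P(X),\lim_{\mathbb P(X)})$ with $\lim_{\mathbb P(X)}\mathcal F=\{x\in X:\mathcal F\to x\}$, and a continuous map $f$ to $f^{-1}$. Points: let $1=\{*\}$ and $\mathbb P(1)=\{\emptyset,1\}$ with $\lim_{\mathbb P(1)}$ constantly equal to $1$. For a convergence $\mathbf C$-object $L$, $\mathrm{pt}\,L$ is the set of morphisms $L\to\mathbb P(1)$ in $\mathbf C^{\mathrm{conv}}$. For $\ell\in L$ let $\ell^\bullet=\{\varphi\in\mathrm{pt}\,L:\varphi(\ell)=1\}$; for a filter $\mathcal F$ of subsets of $\mathrm{pt}\,L$ let $\mathcal F^\circ=\{\ell\in L:\ell^\bullet\in\mathcal F\}$. The convergence on $\mathrm{pt}\,L$ is: $\mathcal F\to\varphi$ iff $\varphi\in(\lim_L\mathcal F^\circ)^\bullet$. On a morphism $\varphi:L\to L'$ of $\mathbf C^{\mathrm{conv}}$, $\mathrm{pt}\,\varphi:\mathrm{pt}\,L'\to\mathrm{pt}\,L$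 is $\psi\mapsto\psi\circ\varphi$. *)

(* Defs.v *)
Set Implicit Arguments.

Record OrdStruct := { ocar : Type; ole : ocar -> ocar -> Prop }.

Definition is_lb (L : OrdStruct) (S : ocar L -> Prop) (m : ocar L) :=
  forall s, S s -> ole L m s.
Definition is_ub (L : OrdStruct) (S : ocar L -> Prop) (m : ocar L) :=
  forall s, S s -> ole L s m.
Definition is_glb (L : OrdStruct) (S : ocar L -> Prop) (m : ocar L) :=
  is_lb L S m /\ forall m', is_lb L S m' -> ole L m' m.
Definition is_lub (L : OrdStruct) (S : ocar L -> Prop) (m : ocar L) :=
  is_ub L S m /\ forall m', is_ub L S m' -> ole L m m'.

Definition pairset (L : OrdStruct) (a b : ocar L) : ocar L -> Prop :=
  fun x => x = a \/ x = b.
Definition emptyset (L : OrdStruct) : ocar L -> Prop := fun _ => False.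

Definition IsPoset (L : OrdStruct) :=
  (forall a, ole L a a) /\
  (forall a b c, ole L a b -> ole L b c -> ole L a c) /\
  (forall a b, ole L a b -> ole L b a -> a = b).

Definition IsLattice (L : OrdStruct) :=
  IsPoset L /\
  (forall a b, exists m, is_glb L (pairset L a b) m) /\
  (forall a b, exists m, is_lub L (pairset L a b) m) /\
  (exists t, is_glb L (emptyset L) t) /\
  (exists z, is_lub L (emptyset L) z).

Definition range (L : OrdStruct) (I : Type) (f : I -> ocar L) : ocar L -> Prop :=
  fun y => exists i, f i = y.

Definition Monotone (L L' : OrdStruct) (phi : ocar L -> ocar L') :=
  forall a b, ole L a b -> ole L' (phi a) (phi b).

Definition PresInf (I : Type) (L L' : OrdStruct) (phi : ocar L -> ocar L') :=
  forall (f : I -> ocar L) (m : ocar L),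
    is_glb L (range L f) m -> is_glb L' (range L' (fun i => phi (f i))) (phi m).
Definition PresSup (I : Type) (L L' : OrdStruct) (phi : ocar L -> ocar L') :=
  forall (f : I -> ocar L) (m : ocar L),
    is_lub L (range L f) m -> is_lub L' (range L' (fun i => phi (f i))) (phi m).

Definition PresFinInfSup (L L' : OrdStruct) (phi : ocar L -> ocar L') :=
  forall n : nat, PresInf {i : nat | i < n} L L' phi /\ PresSup {i : nat | i < n} L L' phi.

(* morphisms of the admissible category C determined by the index-set classes II, JJ *)
Definition CMor (II JJ : Type -> Prop) (L L' : OrdStruct) (phi : ocar L -> ocar L') :=
  Monotone L L' phi /\
  (forall I : Type, II I -> PresInf I L L' phi) /\
  (forall J : Type, JJ J -> PresSup J L L' phi).

Definition PowOrd (X : Type) : OrdStruct :=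
  {| ocar := X -> Prop; ole := fun A B => forall x, A x -> B x |}.

Definition IsFilter (L : OrdStruct) (F : ocar L -> Prop) :=
  (exists a, F a) /\
  (forall a b, F a -> ole L a b -> F b) /\
  (forall a b m, F a -> F b -> is_glb L (pairset L a b) m -> F m).

Definition Incl (T : Type) (F G : T -> Prop) := forall t, F t -> G t.

Record CObjRaw := { clat : OrdStruct; clim : (ocar clat -> Prop) -> ocar clat }.

Definition IsConvCObj (CObj : OrdStruct -> Prop) (L : CObjRaw) :=
  CObj (clat L) /\
  forall F G, IsFilter (clat L) F -> IsFilter (clat L) G -> Incl F G ->
    ole (clat L) (clim L F) (clim L G).

Definition CconvMor (II JJ : Type -> Prop) (L L' : CObjRaw)
    (phi : ocar (clat L) -> ocar (clat L')) :=
  CMor II JJ (clat L) (clat L') phi /\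
  forall F, IsFilter (clat L') F ->
    ole (clat L') (clim L' F) (phi (clim L (fun l => F (phi l)))).

Record ConvRaw := { pcar : Type; pconv : ((pcar -> Prop) -> Prop) -> pcar -> Prop }.

Definition dotf (X : Type) (x : X) : (X -> Prop) -> Prop := fun S => S x.

Definition IsConvSpace (X : ConvRaw) :=
  (forall x, pconv X (dotf x) x) /\
  (forall F G x, IsFilter (PowOrd (pcar X)) F -> IsFilter (PowOrd (pcar X)) G ->
     pconv X F x -> Incl F G -> pconv X G x).

Definition imgf (X Y : Type) (f : X -> Y) (F : (X -> Prop) -> Prop) : (Y -> Prop) -> Prop :=
  fun B => F (fun x => B (f x)).

Definition Continuous (X Y : ConvRaw) (f : pcar X -> pcar Y) :=
  forall F x, IsFilter (PowOrd (pcar X)) F -> pconv X F x -> pconv Y (imgf f F) (f x).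

Definition PowConv (X : ConvRaw) : CObjRaw :=
  {| clat := PowOrd (pcar X); clim := fun F x => pconv X F x |}.

Definition one1 : unit -> Prop := fun _ => True.
Definition PowOne : CObjRaw :=
  {| clat := PowOrd unit; clim := fun _ => one1 |}.

Definition ptCar (II JJ : Type -> Prop) (L : CObjRaw) :=
  { phi : ocar (clat L) -> (unit -> Prop) | CconvMor II JJ L PowOne phi }.

Definition bullet (II JJ : Type -> Prop) (L : CObjRaw) (l : ocar (clat L)) :
  ptCar II JJ L -> Prop := fun phi => proj1_sig phi l = one1.

Definition circ (II JJ : Type -> Prop) (L : CObjRaw)
    (F : (ptCar II JJ L -> Prop) -> Prop) : ocar (clat L) -> Prop :=
  fun l => F (@bullet II JJ L l).

Definition ptSpace (II JJ : Type -> Prop) (L : CObjRaw) : ConvRaw :=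
  {| pcar := ptCar II JJ L;
     pconv := fun F phi => @bullet II JJ L (clim L (@circ II JJ L F)) phi |}.

(* Main.v *)
Require Import Defs.
From Stdlib Require Import FunctionalExtensionality PropExtensionality ProofIrrelevance Classical.

Lemma one1_iff (v : unit -> Prop) : v = one1 <-> v tt.
Proof.
  split.
  - intros ->. exact I.
  - intros h. apply functional_extensionality. intros []. apply propositional_extensionality.
    unfold one1; split; auto.
Qed.

Lemma unit_set_eq (v1 v2 : unit -> Prop) : (v1 = one1 <-> v2 = one1) -> v1 = v2.
Proof.
  intros h. apply functional_extensionality. intros []. apply propositional_extensionality.
  rewrite <- !one1_iff. exact h.
Qed.

Lemma mor_from_points (II JJ : Type -> Prop) (L : OrdStruct) (Y : Type)
  (ph : Y -> ocar L -> unit -> Prop) (H : forall y, CMor II JJ L (PowOrd unit) (ph y)) :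
  CMor II JJ L (PowOrd Y) (fun l y => ph y l = one1).
Proof.
  assert (Hmon : Monotone L (PowOrd Y) (fun l y => ph y l = one1)).
  { intros a b hab y e. destruct (H y) as [Hm _]. apply one1_iff.
    apply (Hm a b hab tt). rewrite e. exact Logic.I. }
  split; [exact Hmon|split].
  - intros K hI f m [Hlb Hg]. split.
    + intros s [i <-]. apply Hmon. apply Hlb. exists i; reflexivity.
    + intros m' Hm' y Hy.
      destruct (proj1 (proj2 (H y)) K hI f m (conj Hlb Hg)) as [_ G].
      apply one1_iff. apply (G one1).
      * intros s [i <-] u _.
        assert (e : ph y (f i) = one1) by (apply (Hm' _ (ex_intro _ i eq_refl)); exact Hy).
        rewrite e. exact Logic.I.
      * exact Logic.I.
  - intros J hJ f m [Hub Hl]. split.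
    + intros s [i <-]. apply Hmon. apply Hub. exists i; reflexivity.
    + intros m' Hm' y Hy.
      destruct (classic (m' y)) as [h|h]; auto. exfalso.
      destruct (proj2 (proj2 (H y)) J hJ f m (conj Hub Hl)) as [_ G].
      assert (T : ole (PowOrd unit) (ph y m) (fun _ => False)).
      { apply G. intros s [i <-] [] hu. apply h.
        apply (Hm' _ (ex_intro _ i eq_refl)). apply one1_iff. exact hu. }
      apply (T tt). apply one1_iff. exact Hy.
Qed.

Lemma mor_to_point (II JJ : Type -> Prop) (L : OrdStruct) (Y : Type)
  (phi : ocar L -> Y -> Prop) (H : CMor II JJ L (PowOrd Y) phi) (y : Y) :
  CMor II JJ L (PowOrd unit) (fun l _ => phi l y).
Proof.
  destruct H as [Hm [Hi Hs]].
  assert (Hmon : Monotone L (PowOrd unit) (fun l _ => phi l y)).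
  { intros a b hab u e. exact (Hm a b hab y e). }
  split; [exact Hmon|split].
  - intros K hI f m Hg. destruct (Hi K hI f m Hg) as [Hlb G]. split.
    + intros s [i <-]. apply Hmon. apply Hg. exists i; reflexivity.
    + intros m' Hm' u hu.
      apply (G (fun z => z = y /\ m' tt)).
      * intros s [i <-] z [-> hz]. apply (Hm' _ (ex_intro _ i eq_refl) tt hz).
      * split; [reflexivity| destruct u; exact hu].
  - intros J hJ f m Hg. destruct (Hs J hJ f m Hg) as [Hub G]. split.
    + intros s [i <-]. apply Hmon. apply Hg. exists i; reflexivity.
    + intros m' Hm' u hu. destruct u.
      refine (G (fun z => z = y -> m' tt) _ y hu eq_refl).
      intros s [i <-] z hz ->. apply (Hm' _ (ex_intro _ i eq_refl) tt hz).
Qed.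

Lemma cont_to_point (II JJ : Type -> Prop) (X : ConvRaw) (HX : IsConvSpace X) (L : CObjRaw)
  (phi : ocar (clat L) -> pcar X -> Prop) (Hphi : CconvMor II JJ L (PowConv X) phi) (x : pcar X) :
  CconvMor II JJ L PowOne (fun l _ => phi l x).
Proof.
  destruct Hphi as [Hm Hc]. split.
  - exact (@mor_to_point II JJ (clat L) (pcar X) phi Hm x).
  - intros F HF u _.
    set (H := fun S : pcar X -> Prop => F (fun _ => S x)).
    assert (HFone : F one1).
    { destruct HF as [[a Ha] [Hup _]]. apply (Hup a); auto. intros [] _; exact Logic.I. }
    assert (HH : IsFilter (PowOrd (pcar X)) H).
    { destruct HF as [_ [Hup Hmeet]]. split; [|split].
      - exists (fun _ => True). exact HFone.
      - intros a b ha hab. apply (Hup _ _ ha). intros v; apply hab.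
      - intros a b m ha hb [Hlb Hg]. apply (Hmeet _ _ _ ha hb). split.
        + intros s [-> | ->] v hv.
          * apply (Hlb a (or_introl eq_refl)); exact hv.
          * apply (Hlb b (or_intror eq_refl)); exact hv.
        + intros m' Hm' [] hv. apply (Hg (fun z => z = x /\ m' tt)); [|split; auto].
          intros s [-> | ->] z [-> hz].
          * apply (Hm' _ (or_introl eq_refl) tt hz).
          * apply (Hm' _ (or_intror eq_refl) tt hz). }
    assert (Hdot : IsFilter (PowOrd (pcar X)) (dotf x)).
    { split; [|split].
      - exists (fun _ => True). exact Logic.I.
      - intros a b ha hab. apply hab; exact ha.
      - intros a b m ha hb [_ Hg]. apply (Hg (fun z => z = x)); [|reflexivity].
        intros s [-> | ->] z ->; assumption. }
    assert (Hconv : pconv X H x).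
    { destruct HX as [Hd Hup]. apply (Hup (dotf x)); auto.
      intros S hS. unfold H. destruct HF as [_ [Hup' _]]. apply (Hup' one1); auto.
      intros [] _; exact hS. }
    exact (Hc H HH x Hconv).
Qed.

Theorem mainTheorem1 :
  forall (CObj : OrdStruct -> Prop) (II JJ : Type -> Prop),
    (forall X : Type, CObj (PowOrd X)) ->
    (forall L, CObj L -> IsLattice L) ->
    (forall L L' (phi : ocar L -> ocar L'),
        CObj L -> CObj L' -> CMor II JJ L L' phi -> PresFinInfSup L L' phi) ->
    exists Psi : forall (X : ConvRaw) (L : CObjRaw),
        (pcar X -> ptCar II JJ L) -> ocar (clat L) -> pcar X -> Prop,
      (* Psi_{X,L} is a bijection Conv(X, pt L) -> C^conv(L, P X) *)
      (forall X L, IsConvSpace X -> IsConvCObj CObj L ->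
         (forall theta, Continuous X (ptSpace II JJ L) theta ->
            CconvMor II JJ L (PowConv X) (Psi X L theta)) /\
         (forall theta1 theta2,
            Continuous X (ptSpace II JJ L) theta1 ->
            Continuous X (ptSpace II JJ L) theta2 ->
            Psi X L theta1 = Psi X L theta2 -> theta1 = theta2) /\
         (forall phi, CconvMor II JJ L (PowConv X) phi ->
            exists theta, Continuous X (ptSpace II JJ L) theta /\ Psi X L theta = phi)) /\
      (* naturality in X : Psi(theta o f) = P f o Psi(theta), with P f = f^{-1} *)
      (forall X X' L, IsConvSpace X -> IsConvSpace X' -> IsConvCObj CObj L ->
         forall f : pcar X' -> pcar X, Continuous X' X f ->
         forall theta, Continuous X (ptSpace II JJ L) theta ->
           Psi X' L (fun x' => theta (f x')) = (fun l x' => Psi X L theta l (f x'))) /\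
      (* naturality in L : Psi(pt psi o theta) = Psi(theta) o psi, with pt psi (chi) = chi o psi *)
      (forall X L L', IsConvSpace X -> IsConvCObj CObj L -> IsConvCObj CObj L' ->
         forall psi : ocar (clat L') -> ocar (clat L), CconvMor II JJ L' L psi ->
         forall (theta : pcar X -> ptCar II JJ L) (theta' : pcar X -> ptCar II JJ L'),
           Continuous X (ptSpace II JJ L) theta ->
           Continuous X (ptSpace II JJ L') theta' ->
           (forall x, proj1_sig (theta' x) = (fun l => proj1_sig (theta x) (psi l))) ->
           Psi X L' theta' = (fun l => Psi X L theta (psi l))).
Proof.
  intros CObj II JJ _ _ _.
  exists (fun X L theta l x => proj1_sig (theta x) l = one1).
  split; [|split].
  - intros X L HX _. split; [|split].
    + intros theta Hth. split.
      * apply (@mor_from_points II JJ (clat L) (pcar X) (fun y => proj1_sig (theta y))).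
        intros y. exact (proj1 (proj2_sig (theta y))).
      * intros F HF x Hx. exact (Hth F x HF Hx).
    + intros t1 t2 _ _ E. apply functional_extensionality. intros x.
      destruct (t1 x) as [p1 h1] eqn:E1. destruct (t2 x) as [p2 h2] eqn:E2.
      assert (p1 = p2).
      { apply functional_extensionality. intros l. apply unit_set_eq.
        assert (Q := f_equal (fun g => g l x) E). simpl in Q.
        rewrite E1, E2 in Q. simpl in Q. rewrite Q. tauto. }
      subst p2. f_equal. apply proof_irrelevance.
    + intros phi Hphi.
      exists (fun x => exist _ (fun l (_ : unit) => phi l x) (@cont_to_point II JJ X HX L phi Hphi x)).
      assert (Heq : (fun l x => (fun _ : unit => phi l x) = one1) = phi).
      { apply functional_extensionality; intros l. apply functional_extensionality; intros x.
        apply propositional_extensionality. apply (one1_iff (fun _ => phi l x)). }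
      split.
      * intros F x HF Hx. simpl. unfold bullet, circ, imgf. simpl.
        apply one1_iff.
        assert (Hc := proj2 Hphi F HF x Hx). simpl in Hc.
        change (phi (clim L (fun l => F (fun y => (fun l0 x0 => (fun _ : unit => phi l0 x0) = one1) l y))) x).
        rewrite Heq. exact Hc.
      * exact Heq.
  - intros. reflexivity.
  - intros X L L' _ _ _ psi _ theta theta' _ _ E.
    apply functional_extensionality; intros l. apply functional_extensionality; intros x.
    rewrite E. reflexivity.
Qed.
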